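(* Let $X\subset\mathbb{R}^d$ be a finite point cloud in general position. For every $1\le k<d$, $\mathrm{MSA}^k\subseteq \mathrm{USC}^k$.
   Context: General position: no $d+1$ points of $X$ on a common affine hyperplane, no $d+2$ on a common $(d-1)$-sphere; $\mathsf{DEL}=\mathsf{DEL}(X)$ is the Delaunay complex and $\mathsf{DEL}^k$ its set of $k$-simplices; $\delta(\sigma)$ is the Euclidean diameter. Total orders $\prec$ on $\mathsf{DEL}^k$ are defined recursively: for edges, $\sigma\prec\sigma'$ iff $\delta(\sigma)<\delta(\sigma')$, or $\delta(\sigma)=\delta(\sigma')$ and $\sigma$ precedes $\sigma'$ lexicographically (vertices indexed and sorted increasingly); for $(k+1)$-simplices, $\sigma\prec\sigma'$ iff $\max\partial\sigma\prec\max\partial\sigma'$, or $\max\partial\sigma=\max\partial\sigma'$ and $\sigma$ precedes $\sigma'$ lexicographically, where $\partial\sigma$ is the set of facets and $\max$ is taken w.r.t. $\prec$ on $k$-simplices. A set $S\subseteq\mathsf{DEL}^k$ is a $k$-spanning acycle if, with $L=\mathsf{DEL}^{(k-1)}\cup S$ ($(k-1)$-skeleton plus $S$), $\tilde\beta_k(L)=0$ and $\tilde\beta_{k-1}(L)=0$ (reduced Betti numbers). $\mathrm{MSA}^k$ is the minimum $k$-spanning acycle of $\mathsf{DEL}$ w.r.t. $\prec$: the unique $k$-spanning acycle minimizing $\sum_{\sigma\in S}w(\sigma)$ for any weight $w:\mathsf{DEL}^k\to\mathbb{R}$ strictly increasing along $\prec$ (equivalently, the output of Kruskal's greedy algorithm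 processing $k$-simplices in $\prec$ order). $\mathrm{USC}^k=\{\sigma\in\mathsf{DEL}^k : \sigma\prec\max\partial\tau \text{ for every } (k+1)\text{-simplex } \tau\in\mathsf{DEL} \text{ with } \sigma\subset\tau\}$ (the $k$-dimensional Urquhart simplices). *)

(* Defs.v *)
From HB Require Import structures.
From mathcomp Require Import all_boot all_order all_algebra.
From mathcomp Require Import boolp reals.
Set Implicit Arguments. Unset Strict Implicit. Unset Printing Implicit Defensive.
Import Order.TTheory GRing.Theory Num.Theory.
Local Open Scope ring_scope.

Section Geometry.
Variables (R : realType) (d n : nat).
Implicit Types (x y : 'rV[R]_d) (p : 'I_n -> 'rV[R]_d) (s t : {set 'I_n}).

Definition enorm x : R := Num.sqrt (\sum_(l < d) x 0 l ^+ 2).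
Definition edist x y : R := enorm (x - y).

Definition general_position p : Prop :=
  (forall S : {set 'I_n}, #|S| = d.+1 ->
     ~ exists (a : 'rV[R]_d) (b : R),
         a != 0 /\ forall i, i \in S -> \sum_(l < d) a 0 l * p i 0 l = b) /\
  (forall S : {set 'I_n}, #|S| = d.+2 ->
     ~ exists (c : 'rV[R]_d) (r : R),
         forall i, i \in S -> edist (p i) c = r).

(** Delaunay complex = nerve of the Voronoi domains:
    a nonempty vertex set s spans a Delaunay simplex iff some point c
    is (weakly) closest to every p i, i in s, among all points of X. *)
Definition is_delaunay p s : Prop :=
  s != set0 /\
  exists c : 'rV[R]_d, forall i j, i \in s -> edist c (p i) <= edist c (p j).

Definition inDEL p s : bool := `[< is_delaunay p s >].

Definition DELk p (k : nat) : {set {set 'I_n}} :=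
  [set s | inDEL p s & #|s| == k.+1].

Definition diam p s : R :=
  \big[Num.max/0]_(i in s) \big[Num.max/0]_(j in s) edist (p i) (p j).

Fixpoint lexlt_seq (a b : seq nat) : bool :=
  match a, b with
  | x :: a', y :: b' => (x < y)%N || ((x == y) && lexlt_seq a' b')
  | [::], _ :: _ => true
  | _, _ => false
  end.

Definition sorted_vertices s : seq nat := sort leq [seq val i | i <- enum s].

Definition lexlt s t : bool := lexlt_seq (sorted_vertices s) (sorted_vertices t).

Definition facets s : {set {set 'I_n}} := [set s :\ i | i in s].

Definition max_facet (lt : rel {set 'I_n}) s : {set 'I_n} :=
  odflt set0 [pick f in facets s |
              [forall g in facets s, (g == f) || lt g f]].

(** Total orders prec on k-simplices, defined recursively;
    precS m is the order on (m+1)-simplices. *)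
Fixpoint precS p (m : nat) : rel {set 'I_n} :=
  if m is m'.+1 then
    fun s t =>
      let ms := max_facet (precS p m') s in
      let mt := max_facet (precS p m') t in
      precS p m' ms mt || ((ms == mt) && lexlt s t)
  else
    fun s t => (diam p s < diam p t) || ((diam p s == diam p t) && lexlt s t).

(** prec p k : the order on k-simplices (meaningful for k >= 1). *)
Definition prec p (k : nat) : rel {set 'I_n} := precS p k.-1.

Definition USC p (k : nat) : {set {set 'I_n}} :=
  [set s in DELk p k |
     [forall t in DELk p k.+1, (s \subset t) ==> prec p k s (max_facet (prec p k) t)]].

End Geometry.

Section Homology.
Variables (F : fieldType) (n : nat).
Local Notation N := #|{: {set 'I_n}}|.
Local Notation simp a := (@enum_val _ {: {set 'I_n}} a).

(** A finite simplicial complex is given by a boolean predicate on vertex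
    sets; for reduced homology it is assumed to contain the empty simplex
    (the (-1)-simplex), which makes the augmentation part of the boundary. *)

(** Sign of the face t of s: (-1)^(position of the removed vertex in the
    increasingly sorted vertex list of s). *)
Definition face_sign (s t : {set 'I_n}) : F :=
  (-1) ^+ (\sum_(v in s :\: t) #|[set u in s | (u < v)%N]|)%N.

(** Boundary map from j-chains to (j-1)-chains of K, as a matrix acting on
    row vectors indexed by all vertex sets (entries vanish off K). *)
Definition bdry (K : pred {set 'I_n}) (j : nat) : 'M[F]_(N, N) :=
  \matrix_(a, b)
    (if [&& K (simp a), #|simp a| == j.+1, K (simp b), simp b \subset simp a
          & #|simp b| == j]
     then face_sign (simp a) (simp b) else 0).

Definition chains (K : pred {set 'I_n}) (j : nat) : 'M[F]_(N, N) :=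
  \matrix_(a, b) ((a == b) && K (simp a) && (#|simp a| == j.+1))%:R.

Definition rbetti (K : pred {set 'I_n}) (j : nat) : nat :=
  (\rank (chains K j :&: kermx (bdry K j))%MS - \rank (bdry K j.+1))%N.

End Homology.

Section SpanningAcycles.
Variables (F : fieldType) (R : realType) (d n : nat).

(** The complex DEL^(k-1) ∪ S (with the empty simplex, for reduced homology). *)
Definition skel_plus (p : 'I_n -> 'rV[R]_d) (k : nat) (S : {set {set 'I_n}})
  : pred {set 'I_n} :=
  fun s => (s == set0) || (inDEL p s && (#|s| <= k)%N) || (s \in S).

Definition spanning_acycle (p : 'I_n -> 'rV[R]_d) (k : nat)
  (S : {set {set 'I_n}}) : Prop :=
  S \subset DELk p k /\
  rbetti F (skel_plus p k S) k = 0%N /\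
  rbetti F (skel_plus p k S) k.-1 = 0%N.

Definition prec_increasing (p : 'I_n -> 'rV[R]_d) (k : nat)
  (w : {set 'I_n} -> R) : Prop :=
  forall s t, s \in DELk p k -> t \in DELk p k -> prec p k s t -> w s < w t.

(** S is the minimum k-spanning acycle w.r.t. prec: it is a k-spanning
    acycle minimizing the total weight for a prec-increasing weight. *)
Definition is_MSA (p : 'I_n -> 'rV[R]_d) (k : nat) (S : {set {set 'I_n}}) : Prop :=
  spanning_acycle p k S /\
  forall w, prec_increasing p k w ->
    forall S', spanning_acycle p k S' ->
      \sum_(s in S) w s <= \sum_(s in S') w s.

End SpanningAcycles.

(* Main.v *)
Require Import Defs.
From HB Require Import structures.
From mathcomp Require Import all_boot all_order all_algebra.
From mathcomp Require Import boolp reals.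
Set Implicit Arguments. Unset Strict Implicit. Unset Printing Implicit Defensive.
Import Order.TTheory GRing.Theory Num.Theory.
Local Open Scope ring_scope.

Lemma lexlt_irr a : lexlt_seq a a = false.
Proof. by elim: a => //= x a ->; rewrite ltnn eqxx. Qed.

Lemma lexlt_trans a b c : lexlt_seq a b -> lexlt_seq b c -> lexlt_seq a c.
Proof.
elim: a b c => [|x a IH] [|y b] [|z c] //=.
case/orP=> [xy|/andP[/eqP-> ab]]; case/orP=> [yz|/andP[/eqP<- bc]].
- by rewrite (ltn_trans xy yz).
- by rewrite xy.
- by rewrite yz.
- by rewrite eqxx (IH _ _ ab bc) orbT.
Qed.

Lemma lexlt_total a b : a != b -> lexlt_seq a b || lexlt_seq b a.
Proof.
elim: a b => [|x a IH] [|y b] //=.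
case: (ltngtP x y) => //= xy.
subst y => H; apply: IH; apply: contraNneq H => ->; by [].
Qed.

Section Ord.
Variable n : nat.

Lemma mem_sorted_vertices (s : {set 'I_n}) i :
  (val i \in sorted_vertices s) = (i \in s).
Proof. by rewrite /sorted_vertices mem_sort (mem_map val_inj) mem_enum. Qed.

Lemma sorted_vertices_inj (s t : {set 'I_n}) :
  sorted_vertices s = sorted_vertices t -> s = t.
Proof.
by move=> E; apply/setP=> i; rewrite -!mem_sorted_vertices E.
Qed.

Definition sto (T : eqType) (lt : rel T) :=
  [/\ forall x, lt x x = false, forall y x z, lt x y -> lt y z -> lt x z &
      forall x y, x != y -> lt x y || lt y x].

Lemma lexlt_sto : sto (@lexlt n).
Proof.
split.
- by move=> s; rewrite /lexlt lexlt_irr.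
- by move=> y x z; apply: lexlt_trans.
- move=> x y xy; apply: lexlt_total; apply: contraNneq xy.
  by move/sorted_vertices_inj->.
Qed.

Lemma key_sto (T : eqType) (lt0 : rel T) (g : {set 'I_n} -> T) :
  sto lt0 ->
  sto (fun s t => lt0 (g s) (g t) || ((g s == g t) && lexlt s t)).
Proof.
case=> irr tr tot; case: lexlt_sto => lirr ltr ltot; split.
- by move=> s; rewrite irr eqxx lirr.
- move=> y x z /orP[h1|/andP[/eqP e1 h1]] /orP[h2|/andP[/eqP e2 h2]].
  + by rewrite (tr _ _ _ h1 h2).
  + by rewrite -e2 h1.
  + by rewrite e1 h2.
  + by rewrite e1 e2 eqxx (ltr _ _ _ h1 h2) orbT.
- move=> x y xy /=; case: (g x =P g y) => [e|/eqP ne].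
  + rewrite e eqxx irr /=; by case/orP: (ltot _ _ xy) => ->; rewrite ?orbT.
  + move: (tot _ _ ne); case: (lt0 (g x) (g y)) => //=; by case: (lt0 (g y) (g x)) => //=; rewrite orbT.
Qed.

Lemma precS_sto (R : realType) d (p : 'I_n -> 'rV[R]_d) m : sto (precS p m).
Proof.
elim: m => [|m IH] /=.
- apply: (key_sto (lt0 := fun x y : R => x < y)); split.
  + by move=> x; rewrite ltxx.
  + by move=> y x z; apply: lt_trans.
  + by move=> x y; rewrite neq_lt.
- exact: key_sto.
Qed.

Lemma sto_max (lt : rel {set 'I_n}) (A : {set {set 'I_n}}) f0 :
  sto lt -> f0 \in A ->
  exists2 f, f \in A & forall g, g \in A -> (g == f) || lt g f.
Proof.
case=> irr tr tot f0A.
case: (@arg_maxnP _ f0 (mem A) (fun f => #|[set g in A | lt g f]|) f0A).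
move=> f fA fmax; exists f => // g gA.
case: (eqVneq g f) => //= gf.
case/orP: (tot _ _ gf) => // fg; exfalso.
have := fmax g gA; apply/negP; rewrite -ltnNge.
have sub : f |: [set h in A | lt h f] \subset [set h in A | lt h g].
  apply/subsetP=> h; rewrite !inE => /orP[/eqP->|/andP[hA hf]].
    by apply/andP; split.
  by rewrite hA (tr _ _ _ hf fg).
apply: leq_trans (subset_leq_card sub).
by rewrite cardsU1 inE irr andbF.
Qed.

Lemma max_facetP (lt : rel {set 'I_n}) s :
  sto lt -> s != set0 ->
  max_facet lt s \in facets s /\
  forall g, g \in facets s -> (g == max_facet lt s) || lt g (max_facet lt s).
Proof.
move=> H /set0Pn[i si].
have f0 : s :\ i \in facets s by apply/imsetP; exists i.
have [f fA fmax] := sto_max H f0.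
rewrite /max_facet; case: pickP => [g /andP[gin /forallP gmax] | none].
  split=> // h hin; exact: (implyP (gmax h) hin).
exfalso; move: (none f); rewrite fA /=; move/negP; apply.
by apply/forallP=> h; apply/implyP; exact: fmax.
Qed.

End Ord.
Section Comb.
Variable n : nat.
Implicit Types A B C : {set 'I_n}.

Lemma facet_eq A B x : B \subset A -> #|B|.+1 = #|A| -> x \in A -> x \notin B ->
  B = A :\ x.
Proof.
move=> BA cB xA xB; apply/eqP; rewrite eqEcard; apply/andP; split.
  apply/subsetP=> y yB; rewrite !inE (subsetP BA _ yB) andbT.
  by apply: contraNneq xB => <-.
by rewrite -ltnS cB (cardsD1 x A) xA.
Qed.

Lemma setDD1 A x : x \in A -> A :\: (A :\ x) = [set x].
Proof.
move=> xA; apply/setP=> y; rewrite !inE.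
by case: (y =P x) => [->|_]; rewrite ?xA //= andNb.
Qed.

Lemma setD_facet A C v w : A :\: C = [set v; w] -> v != w -> (A :\ v) :\: C = [set w].
Proof.
move=> E vw; apply/setP=> y; move/setP: E => /(_ y); rewrite !inE.
case: (y =P v) => [->|yv] /=.
  by rewrite andbF (negbTE vw).
by [].
Qed.

End Comb.

Section LA.
Variables (F : fieldType) (n : nat).
Local Notation N := #|{: {set 'I_n}}|.
Local Notation simp a := (@enum_val _ {: {set 'I_n}} a).

Lemma face_sign1 (A B : {set 'I_n}) x : A :\: B = [set x] ->
  face_sign F A B = (-1) ^+ #|[set u in A | (u < x)%N]|.
Proof. by move=> E; rewrite /face_sign E big_set1. Qed.

Lemma bdry_bdry (K : pred {set 'I_n}) j :
  (forall s i, K s -> #|s| = j.+2 -> i \in s -> K (s :\ i)) ->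
  bdry F K j.+1 *m bdry F K j = 0.
Proof.
move=> Kc; apply/matrixP=> a c; rewrite !mxE.
rewrite (reindex (@enum_rank _) (onW_bij _ (enum_rank_bij _))) /=.
under eq_bigr => B _ do rewrite !mxE enum_rankK.
set A := simp a; set C := simp c.
have [hA|hA] := boolP [&& K A, #|A| == j.+2, K C, C \subset A & #|C| == j];
  last first.
  apply: big1 => B _.
  case: ifP => [/and5P[KA sA KB BA sB]|_]; last by rewrite mul0r.
  case: ifP => [/and5P[_ _ KC CB sC]|_]; last by rewrite mulr0.
  by case/negP: hA; rewrite KA sA KC sC (subset_trans CB BA).
case/and5P: hA => KA /eqP sA KC CA /eqP sC.
have : #|A :\: C| == 2.
  by rewrite cardsD (setIidPr CA) sA sC -addn2 addKn.
case/cards2P => v [w [vw E]].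
wlog vw' : v w vw E / (v < w)%N.
  move=> H; case: (ltngtP v w) => [h|h|h].
  - exact: (H v w).
  - by apply: (H w v); rewrite 1?eq_sym // setUC.
  - by move: vw; rewrite (val_inj h) eqxx.
have : v \in A :\: C by rewrite E !inE eqxx.
have : w \in A :\: C by rewrite E !inE eqxx orbT.
rewrite !inE => /andP[wC wA] /andP[vC vA].
have B12 : A :\ w != A :\ v.
  by apply/negP=> /eqP/setP/(_ w); rewrite !inE eqxx eq_sym (negbTE vw) wA.
rewrite (bigD1 (A :\ v)) // (bigD1 (A :\ w)) //= big1 ?addr0; last first.
  move=> B /andP[B2 B1].
  case: ifP => [/and5P[_ _ _ BA /eqP sB]|_]; last by rewrite mul0r.
  case: ifP => [/and5P[_ _ _ CB _]|_]; last by rewrite mulr0.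
  exfalso.
  have [x xAB] : exists x, x \in A :\: B.
    by apply/set0Pn; rewrite -card_gt0 cardsD (setIidPr BA) sA sB subSS subSnn.
  move/setDP: xAB => [xA xB].
  have hc : #|B|.+1 = #|A| by rewrite sA sB.
  have eB := facet_eq BA hc xA xB.
  have : x \in A :\: C.
    by rewrite inE xA andbT; apply: contra xB; apply/subsetP.
  rewrite E !inE => /orP[]/eqP ex; subst x.
    by rewrite eB eqxx in B2.
  by rewrite eB eqxx in B1.
have sD x : x \in A -> #|A :\ x| = j.+1.
  by move=> xA; apply/eqP; rewrite -eqSS -sA (cardsD1 x A) xA.
have c1 x : x \in A -> x \notin C ->
    [&& K A, #|A| == j.+2, K (A :\ x), A :\ x \subset A & #|A :\ x| == j.+1].
  by move=> xA xC; rewrite KA sA eqxx (Kc _ _ KA sA xA) subD1set (sD _ xA) eqxx.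
have c2 x : x \in A -> x \notin C ->
    [&& K (A :\ x), #|A :\ x| == j.+1, K C, C \subset A :\ x & #|C| == j].
  by move=> xA xC; rewrite (Kc _ _ KA sA xA) (sD _ xA) KC subsetD1 CA xC sC !eqxx.
rewrite (c1 v vA vC) (c2 v vA vC) (c1 w wA wC) (c2 w wA wC).
rewrite (face_sign1 (setDD1 vA)) (face_sign1 (setDD1 wA)).
rewrite (face_sign1 (setD_facet E vw)).
have E' : A :\: C = [set w; v] by rewrite E setUC.
rewrite (face_sign1 (setD_facet E' (_ : w != v))); last by rewrite eq_sym.
have -> : [set u in A :\ w | (u < v)%N] = [set u in A | (u < v)%N].
  apply/setP=> u; rewrite !inE; case: (u =P w) => [->|]; last by [].
  by rewrite ltnNge (ltnW vw') /= andbF.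
have -> : [set u in A | (u < w)%N] = v |: [set u in A :\ v | (u < w)%N].
  apply/setP=> u; rewrite !inE; case: (u =P v) => [->|]; last by [].
  by rewrite vA vw'.
rewrite cardsU1 !inE eqxx /= add1n exprS mulN1r mulNr mulrC addrN //.
Qed.

Definition mask (P : pred 'I_N) : 'M[F]_N := diag_mx (\row_a (P a)%:R).

Lemma rank_mask P : \rank (mask P) = #|P|.
Proof.
have D := @mxdirect_delta F _ P N id (fun x y _ _ => id).
have -> : \rank (mask P) = \rank (\sum_(i | P i) <<delta_mx 0 i : 'rV[F]_N>>)%MS.
  apply: eqmx_rank; apply/andP; split.
    apply/row_subP=> i; rewrite row_diag_mx mxE.
    case: (boolP (P i)) => Pi; last by rewrite scale0r sub0mx.
    by rewrite scale1r (sumsmx_sup i) // genmxE.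
  apply/sumsmx_subP=> i Pi; rewrite genmxE.
  by have := row_sub i (mask P); rewrite row_diag_mx mxE Pi scale1r.
move/mxdirectP: D => /= ->.
rewrite (eq_bigr (fun _ => 1%N)) ?sum1_card // => i _.
by rewrite mxrank_gen mxrank_delta.
Qed.

Lemma chains_mask (K : pred {set 'I_n}) j :
  chains F K j = mask (fun a => K (simp a) && (#|simp a| == j.+1)).
Proof.
apply/matrixP=> a b; rewrite !mxE; case: (a == b); by rewrite ?mulr1n ?mulr0n.
Qed.

Lemma card_simp (T : {set {set 'I_n}}) : #|[pred a : 'I_N | simp a \in T]| = #|T|.
Proof.
rewrite -(card_imset _ (@enum_rank_inj _)); apply: eq_card => a.
rewrite inE; apply/idP/imsetP => [aT|[x xT ->]].
  by exists (simp a) => //; rewrite enum_valK.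
by rewrite enum_rankK.
Qed.

Lemma bdry_ext (K1 K2 : pred {set 'I_n}) j :
  (forall s : {set 'I_n}, (#|s| <= j.+1)%N -> K1 s = K2 s) -> bdry F K1 j = bdry F K2 j.
Proof.
move=> H; apply/matrixP=> a b; rewrite !mxE.
have [sa|sa] := eqVneq #|enum_val a| j.+1; last by rewrite !andbF.
have [sb|sb] := eqVneq #|enum_val b| j; last by rewrite !andbF.
by rewrite !H ?sa ?sb.
Qed.

Lemma chains_ext (K1 K2 : pred {set 'I_n}) j :
  (forall s : {set 'I_n}, (#|s| <= j.+1)%N -> K1 s = K2 s) -> chains F K1 j = chains F K2 j.
Proof.
move=> H; apply/matrixP=> a b; rewrite !mxE.
have [sa|sa] := eqVneq #|enum_val a| j.+1; last by rewrite !andbF.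
by rewrite H ?sa.
Qed.

Lemma bdry_sub_chains (K : pred {set 'I_n}) j :
  (bdry F K j.+1 <= chains F K j)%MS.
Proof.
suff -> : bdry F K j.+1 = bdry F K j.+1 *m chains F K j by apply: submxMl.
rewrite chains_mask mul_mx_diag; apply/matrixP=> a b; rewrite !mxE.
case: ifP => [/and5P[_ _ -> _ ->]|_]; by rewrite ?mulr1 ?mul0r.
Qed.

Lemma chains_bdry (K : pred {set 'I_n}) j :
  chains F K j *m bdry F K j = bdry F K j.
Proof.
rewrite chains_mask mul_diag_mx; apply/matrixP=> a b; rewrite !mxE.
case: ifP => [/and5P[-> -> _ _ _]|_]; by rewrite ?mul1r ?mulr0.
Qed.

End LA.

From mathcomp Require Import zify.

Section Main.
Variables (F : fieldType) (R : realType) (d n : nat) (p : 'I_n -> 'rV[R]_d) (m : nat).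
Local Notation N := #|{: {set 'I_n}}|.
Local Notation simp a := (@enum_val _ {: {set 'I_n}} a).
Local Notation DK := (DELk p m.+1).
Definition Kskel : pred {set 'I_n} :=
  fun s => (s == set0) || (inDEL p s && (#|s| <= m.+1)%N).
Local Notation KT T := (skel_plus p m.+1 T).
Local Notation Mx T := (bdry F (skel_plus p m.+1 T) m.+1).
Local Notation Dm := (bdry F (skel_plus p m.+1 (DELk p m.+1)) m.+1).
Definition Zc := (chains F Kskel m :&: kermx (bdry F Kskel m))%MS.

Lemma inDEL_sub (s t : {set 'I_n}) : inDEL p t -> s \subset t -> s != set0 -> inDEL p s.
Proof.
move=> /asboolP[_ [c Hc]] st s0; apply/asboolP; split => //.
by exists c => i j iS; apply: Hc; exact: (subsetP st).
Qed.

Lemma DELk_card k (s : {set 'I_n}) : s \in DELk p k -> #|s| = k.+1.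
Proof. by rewrite inE => /andP[_ /eqP]. Qed.

Lemma KT_small (T : {set {set 'I_n}}) (s : {set 'I_n}) : T \subset DK -> #|s| != m.+2 -> KT T s = Kskel s.
Proof.
move=> TD ns; rewrite /skel_plus /Kskel; case: (boolP (s \in T)) => sT; last by rewrite orbF.
by move: ns; rewrite (DELk_card (subsetP TD _ sT)) eqxx.
Qed.

Lemma KT_top (T : {set {set 'I_n}}) (s : {set 'I_n}) : T \subset DK -> #|s| = m.+2 -> KT T s = (s \in T).
Proof.
move=> TD ss; rewrite /skel_plus ss ltnn andbF orbF.
by case: (s =P set0) => // e; move: ss; rewrite e cards0.
Qed.

Lemma row_Mx (T : {set {set 'I_n}}) a : T \subset DK ->
  row a (Mx T) = if simp a \in T then row a Dm else 0.
Proof.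
move=> TD; case: ifP => aT; apply/rowP=> b; rewrite !mxE.
  have sa := DELk_card (subsetP TD _ aT).
  rewrite (KT_top TD sa) (KT_top (subxx DK) sa) aT (subsetP TD _ aT).
  have [sb|sb] := eqVneq #|enum_val b| m.+1; last by rewrite !andbF.
  have nb : #|enum_val b| != m.+2 by rewrite sb; lia.
  by rewrite (KT_small TD nb) (KT_small (subxx DK) nb).
case: ifP => // /and5P[KA /eqP sa _ _ _]; move: KA.
by rewrite KT_top // aT.
Qed.

Lemma Mx_rank (T : {set {set 'I_n}}) : T \subset DK ->
  (\rank (Mx T) + \rank (chains F (KT T) m.+1 :&: kermx (Mx T)) = #|T|)%N.
Proof.
move=> TD; rewrite -{1}chains_bdry mxrank_mul_ker chains_mask rank_mask.
rewrite -card_simp; apply: eq_card => a; rewrite !inE.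
rewrite unfold_in /=.
have [sa|sa] := eqVneq #|enum_val a| m.+2; first by rewrite KT_top // andbT.
rewrite andbF; apply/esym/negbTE; apply: contra sa => /(subsetP TD) /DELk_card ->.
by [].
Qed.

Lemma rbetti_top (T : {set {set 'I_n}}) : T \subset DK ->
  rbetti F (KT T) m.+1 = \rank (chains F (KT T) m.+1 :&: kermx (Mx T)).
Proof.
move=> TD; rewrite /rbetti.
have -> : bdry F (KT T) m.+2 = 0.
  apply/matrixP => a b; rewrite !mxE.
  have [sa|sa] := eqVneq #|enum_val a| m.+3; last by rewrite andbF.
  rewrite /skel_plus sa ltnNge leqnSn /= andbF orbF.
  case: (boolP (simp a \in T)) => aT.
    by move: sa; rewrite (DELk_card (subsetP TD _ aT)) => /eqP; lia.
  by case: (simp a =P set0) => // e; move: sa; rewrite e cards0.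
by rewrite mxrank0 subn0.
Qed.

Lemma KT_low (T : {set {set 'I_n}}) (s : {set 'I_n}) : T \subset DK -> (#|s| <= m.+1)%N -> KT T s = Kskel s.
Proof. move=> TD h; apply: KT_small => //; apply/eqP => e; move: h; rewrite e; lia. Qed.

Lemma rbetti_low (T : {set {set 'I_n}}) : T \subset DK ->
  rbetti F (KT T) m = (\rank Zc - \rank (Mx T))%N.
Proof.
move=> TD; rewrite /rbetti /Zc.
rewrite (@chains_ext F n (KT T) Kskel m) ?(@bdry_ext F n (KT T) Kskel m) //.
  by move=> s hs; apply: KT_low.
by move=> s hs; apply: KT_low.
Qed.

Lemma Mx_sub_Z (T : {set {set 'I_n}}) : T \subset DK -> (Mx T <= Zc)%MS.
Proof.
move=> TD; rewrite sub_capmx; apply/andP; split.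
  rewrite -(@chains_ext F n (KT T) Kskel m); first exact: bdry_sub_chains.
  by move=> s hs; apply: KT_low.
apply/sub_kermxP.
rewrite -(@bdry_ext F n (KT T) Kskel m); last by move=> s hs; apply: KT_low.
apply: bdry_bdry => s i Ks ss iS.
have sT : s \in T by rewrite -(KT_top TD ss).
have sD : inDEL p s by move: (subsetP TD _ sT); rewrite inE => /andP[].
have c1 : #|s :\ i| = m.+1.
  by apply/eqP; rewrite -eqSS -ss (cardsD1 i s) iS.
rewrite KT_low ?c1 // /Kskel c1 leqnn andbT.
rewrite (inDEL_sub sD (subD1set s i)) ?orbT //.
by rewrite -card_gt0 c1.
Qed.

Lemma tau_rel (tau sigma : {set 'I_n}) (A : 'M[F]_N) :
  tau \in DELk p m.+2 -> sigma \in DK -> sigma \subset tau ->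
  (forall b, simp b \subset tau -> #|simp b| = m.+2 -> simp b != sigma ->
     (row b Dm <= A)%MS) ->
  (row (enum_rank sigma) Dm <= A)%MS.
Proof.
move=> tD sD st H.
pose Kt : pred {set 'I_n} := fun s => KT DK s || (s == tau).
have ct : #|tau| = m.+3 by apply: DELk_card.
have tDEL : inDEL p tau by move: tD; rewrite inE => /andP[].
have KtE : forall s : {set 'I_n}, (#|s| <= m.+2)%N -> Kt s = KT DK s.
  move=> s hs; rewrite /Kt; case: (s =P tau) => [e|]; last by rewrite orbF.
  by move: hs; rewrite e ct ltnn.
have BB : bdry F Kt m.+2 *m bdry F Kt m.+1 = 0.
  apply: bdry_bdry => s i Ks ss iS.
  have e : s = tau.
    move: Ks; rewrite /Kt /skel_plus ss ltnNge leqnSn andbF orbF /=.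
    case: (s =P set0) => [e|_]; first by move: ss; rewrite e cards0.
    case: (boolP (s \in DK)) => [/DELk_card|_]; first by rewrite ss => /eqP; lia.
    by move/eqP.
  subst s.
  have c1 : #|tau :\ i| = m.+2.
    by apply/eqP; rewrite -eqSS -ct (cardsD1 i tau) iS.
  rewrite /Kt KT_top ?c1 // inE c1 eqxx andbT.
  by rewrite (inDEL_sub tDEL (subD1set tau i)) // -card_gt0 c1.
rewrite (@bdry_ext F n Kt (KT DK) m.+1) // in BB.
have := congr1 (row (enum_rank tau)) BB; rewrite row_mul row0 mulmx_sum_row.
set u := row _ _.
rewrite (bigD1 (enum_rank sigma)) //= => /eqP; rewrite addr_eq0 => /eqP E.
have us : u 0 (enum_rank sigma) = face_sign F tau sigma.
  rewrite !mxE !enum_rankK /Kt eqxx orbT ct eqxx.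
  by rewrite KT_top ?sD ?st ?(DELk_card sD) ?eqxx.
have u0 : u 0 (enum_rank sigma) != 0.
  by rewrite us /face_sign expf_eq0 oppr_eq0 oner_eq0 andbF.
have : (u 0 (enum_rank sigma) *: row (enum_rank sigma) Dm <= A)%MS.
  rewrite E -scaleN1r scalemx_sub // summx_sub // => b bs.
  rewrite !mxE enum_rankK.
  case: ifP => [/and5P[_ _ Kb bt /eqP sb]|_]; last by rewrite scale0r sub0mx.
  apply: scalemx_sub; apply: H => //.
  by apply: contraNneq bs => <-; rewrite enum_valK.
by move/(scalemx_sub (u 0 (enum_rank sigma))^-1); rewrite scalerA mulVf // scale1r.
Qed.

End Main.

Unset Implicit Arguments.

Lemma prec_increasing_w (R : realType) d n (p : 'I_n -> 'rV[R]_d) m :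
  prec_increasing p m.+1 (fun s => (#|[set t | precS p m t s]|)%:R : R).
Proof.
move=> s t _ _ H; rewrite ltr_nat /=.
case: (precS_sto p m) => irr tr _.
have sub : s |: [set x | precS p m x s] \subset [set x | precS p m x t].
  apply/subsetP=> h; rewrite !inE => /orP[/eqP->|hs] //.
  exact: (tr _ _ _ hs H).
apply: leq_trans (subset_leq_card sub).
by rewrite cardsU1 inE irr.
Qed.

Theorem lemma2 (F : fieldType) (R : realType) (d n : nat)
  (p : 'I_n -> 'rV[R]_d) (k : nat) (S : {set {set 'I_n}}) :
  injective p ->
  general_position p ->
  (1 <= k)%N -> (k < d)%N ->
  is_MSA F p k S ->
  S \subset USC p k.
Proof.
move=> _ _ k1 _ [[SD [h1 h2]] Hmin].
destruct k as [|m]; first by [].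
apply/subsetP=> sigma sS.
have sD := subsetP SD _ sS.
rewrite inE sD /=.
apply/forallP => tau; apply/implyP => tD; apply/implyP => st.
apply: contraT => nprec.
have sto := precS_sto p m.
have ct : #|tau| = m.+3 := DELk_card tD.
have cs : #|sigma| = m.+2 := DELk_card sD.
have tDEL : inDEL p tau by move: tD; rewrite inE => /andP[].
have tne : tau != set0 by rewrite -card_gt0 ct.
have [mfF mfmax] := max_facetP sto tne.
have facetP : forall f : {set 'I_n}, f \subset tau -> #|f| = m.+2 -> f \in facets tau.
  move=> f ft cf.
  have [x /setDP[xt xf]] : exists x, x \in tau :\: f.
    by apply/set0Pn; rewrite -card_gt0 cardsD (setIidPr ft) ct cf subSS subSnn.
  have hc : #|f|.+1 = #|tau| by rewrite ct cf.
  by rewrite (facet_eq ft hc xt xf); apply/imsetP; exists x.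
have sF := facetP _ st cs.
have esig : sigma = max_facet (precS p m) tau.
  by case/orP: (mfmax _ sF) => [/eqP //|h]; move: nprec; rewrite /prec /= h.
set A := bdry F (skel_plus p m.+1 (S :\ sigma)) m.+1.
set MS := bdry F (skel_plus p m.+1 S) m.+1.
set Dm := bdry F (skel_plus p m.+1 (DELk p m.+1)) m.+1.
set rs := row (enum_rank sigma) Dm.
have SD' : S :\ sigma \subset DELk p m.+1 by apply: subset_trans (subD1set _ _) SD.
have hMS : \rank MS = #|S|.
  have := Mx_rank F SD; rewrite -(rbetti_top F SD) h1 addn0 //.
have hZ : (\rank (Zc F p m) <= \rank MS)%N.
  by apply/eqP; rewrite -(rbetti_low F SD); exact: h2.
have ZM : (Zc F p m <= MS)%MS.
  by rewrite -(geq_leqif (mxrank_leqif_sup (Mx_sub_Z F SD))).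
have DM : (Dm <= MS)%MS := submx_trans (Mx_sub_Z F (subxx _)) ZM.
have MS_sub : (MS <= A + rs)%MS.
  apply/row_subP=> a; rewrite (row_Mx F a SD); case: ifP => aS; last by rewrite sub0mx.
  case: (enum_val a =P sigma) => [e|ne].
    have -> : a = enum_rank sigma by rewrite -e enum_valK.
    exact: addsmxSr.
  have : row a A = row a Dm.
    have ne' : enum_val a != sigma by apply/eqP.
    by rewrite (row_Mx F a SD') inE aS inE ne'.
  move <-; exact: submx_trans (row_sub a A) (addsmxSl _ _).
have cSD : #|S| = #|S :\ sigma|.+1 by rewrite (cardsD1 sigma S) sS.
have rsA : ~~ (rs <= A)%MS.
  apply/negP => rsA.
  have : (\rank MS <= \rank A)%N.
    by apply: mxrankS; apply: submx_trans MS_sub _; rewrite addsmx_sub submx_refl rsA.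
  have HA := Mx_rank F SD'.
  by rewrite hMS cSD -HA ltnNge leq_addr.
have [b /and4P[bt /eqP sb bs nb]] : exists b : 'I_#|{: {set 'I_n}}|,
    [&& enum_val b \subset tau, #|enum_val b| == m.+2, enum_val b != sigma
      & ~~ (row b Dm <= A)%MS].
  apply/existsP; apply: contraR rsA; rewrite negb_exists => /forallP Hb.
  apply: (tau_rel tD sD st) => b bt sb bs.
  by move: (Hb b); rewrite bt sb eqxx bs /= negbK.
set f := enum_val b in bt sb bs nb.
have fDK : f \in DELk p m.+1.
  rewrite inE sb eqxx andbT (inDEL_sub tDEL bt) //.
  by rewrite -card_gt0 sb.
have fS : f \notin S :\ sigma.
  apply/negP => fS; move/negP: nb; apply.
  have : row b A = row b Dm by rewrite (row_Mx F b SD') fS.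
  by move <-; exact: row_sub.
set rf := row b Dm.
have rfMS : (rf <= MS)%MS := submx_trans (row_sub b Dm) DM.
have r1 : (\rank A < \rank (A + rf))%N.
  rewrite (ltn_leqif (mxrank_leqif_sup (addsmxSl A rf))).
  by apply: contra nb => H; exact: submx_trans (addsmxSr A rf) H.
have r2 : (\rank (A + rs) <= \rank A + 1)%N.
  apply: leq_trans (mxrank_adds_leqif A rs).1 _.
  by rewrite leq_add2l rank_leq_row.
have sub : (A + rf <= A + rs)%MS.
  by rewrite addsmx_sub addsmxSl (submx_trans rfMS MS_sub).
have eq2 : (A + rs <= A + rf)%MS.
  rewrite -(geq_leqif (mxrank_leqif_sup sub)).
  by apply: leq_trans r2 _; rewrite addn1.
set S' := f |: (S :\ sigma).
have SD'' : S' \subset DELk p m.+1.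
  apply/subsetP=> x; rewrite in_setU1 => /orP[/eqP->|/setD1P[_ xS]] //.
  exact: (subsetP SD).
have AS' : (A + rf <= bdry F (skel_plus p m.+1 S') m.+1)%MS.
  rewrite addsmx_sub; apply/andP; split.
    apply/row_subP=> a; rewrite (row_Mx F a SD'); case: ifP => aS; last by rewrite sub0mx.
    have <- : row a (bdry F (skel_plus p m.+1 S') m.+1) = row a Dm.
      by rewrite (row_Mx F a SD'') inE aS orbT.
    exact: row_sub.
  have <- : row b (bdry F (skel_plus p m.+1 S') m.+1) = rf.
    by rewrite (row_Mx F b SD'') setU11.
  exact: row_sub.
have MSS' : (MS <= bdry F (skel_plus p m.+1 S') m.+1)%MS.
  exact: submx_trans MS_sub (submx_trans eq2 AS').
have cS' : #|S'| = #|S| by rewrite cardsU1 fS cSD.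
have acyc : spanning_acycle F p m.+1 S'.
  split => //; split.
    rewrite (rbetti_top F SD''); have HA := Mx_rank F SD''.
    have HM := mxrankS MSS'.
    have e2 : \rank (bdry F (skel_plus p m.+1 S') m.+1) = #|S'|.
      apply/eqP; rewrite eqn_leq -{1}HA leq_addr /= cS' -hMS //.
    by move: HA; rewrite e2 -{2}[#|S'|]addn0 => /addnI.
  rewrite /= (rbetti_low F SD''); apply/eqP; rewrite subn_eq0.
  exact: leq_trans hZ (mxrankS MSS').
have := Hmin _ (@prec_increasing_w R d n p m) _ acyc.
rewrite (big_setD1 sigma sS) (big_setU1 _ fS) /= lerD2r.
move=> H; suff : (#|[set t | precS p m t f]| < #|[set t | precS p m t sigma]|)%N.
  by rewrite ltnNge -(ler_nat R) H.
have fF := facetP _ bt sb.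
have fs : precS p m f sigma.
  by case/orP: (mfmax _ fF) => [/eqP e|]; [move: bs; rewrite esig e eqxx | rewrite -esig].
apply: leq_trans (subset_leq_card (_ : f |: [set t | precS p m t f] \subset _)).
  by case: sto => irr _ _; rewrite cardsU1 inE irr.
case: sto => _ tr _; apply/subsetP=> h; rewrite !inE => /orP[/eqP->|hs] //.
exact: (tr _ _ _ hs fs).
Qed.
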